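(* Let $S=\{s_1,\dots,s_p\}$ and let $F=\{C_1,\dots,C_q\}$ be a family of subsets of $S$ with $q\le p$ and $\bigcup_j C_j=S$. Construct the graph $G$ as follows: vertices $a_1,\dots,a_p$, $b_1,\dots,b_q$, $z_1,\dots,z_p$, $r_1,\dots,r_{p+1}$, $w$, $r'_{p+1}$; edges $a_ib_j$ whenever $s_i\in C_j$, $a_iz_i$ for all $i\in[p]$, $b_ir_j$ for all $i\in[q]$ and $j\in[p+1]$, and $r_{p+1}w$, $wr'_{p+1}$. Then $G$ is a comb-convex bipartite graph with parts $X=\{a_1,\dots,a_p,r_1,\dots,r_{p+1},r'_{p+1}\}$ and $Y=\{b_1,\dots,b_q,z_1,\dots,z_p,w\}$ (with respect to the comb on $X$ with backbone path $r_1r_2\cdots r_{p+1}$ and teeth $a_i$ attached to $r_i$ for $i\in[p]$ and $r'_{p+1}$ attached to $r_{p+1}$), and for every nonnegative integer $t$, $S$ has a cover of size at most $t$ if and only if $G$ has a vertex-edge dominating set of size at most $t+1$.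
   Context: A cover of $S$ in the set system $(S,F)$ is a subfamily $C\subseteq F$ whose union is $S$. A vertex-edge dominating set of a graph $G$ is a set $D\subseteq V(G)$ such that for every edge $uv$, $(N_G[u]\cup N_G[v])\cap D\neq\emptyset$, where $N_G[x]$ is the closed neighbourhood of $x$. A comb is a tree obtained from a path (the backbone) by attaching one pendant vertex (a tooth) to each vertex of the path. A bipartite graph $G=(X\cup Y,E)$ is comb-convex if there is a comb $T$ with vertex set $X$ such that for every $y\in Y$, $N_G(y)$ induces a subtree of $T$. *)

(* Defs.v *)
From HB Require Import structures.
From mathcomp Require Import all_boot.
Set Implicit Arguments. Unset Strict Implicit. Unset Printing Implicit Defensive.

Section Generic.
Variable V : finType.

Definition cnbhd (e : rel V) (x : V) : {set V} := x |: [set y | e x y].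
Definition onbhd (e : rel V) (x : V) : {set V} := [set y | e x y].

Definition ve_dominating (e : rel V) (D : {set V}) : Prop :=
  forall u v, e u v -> (cnbhd e u :|: cnbhd e v) :&: D != set0.

Definition bipartite_parts (e : rel V) (X Y : {set V}) : Prop :=
  [/\ X :&: Y = set0, X :|: Y = setT, symmetric e, irreflexive e &
      forall u v, e u v -> (u \in X) && (v \in Y) || (u \in Y) && (v \in X)].

(* T (an adjacency relation on V) is a comb with vertex set X: a backbone path
   bb 0 - bb 1 - ... - bb (k-1) with a pendant tooth tt i attached to bb i. *)
Definition is_comb (X : {set V}) (T : rel V) : Prop :=
  exists k (bb tt : 'I_k -> V),
    [/\ 0 < k, injective bb /\ injective tt, (forall i j, bb i != tt j),
        X = [set bb i | i : 'I_k] :|: [set tt i | i : 'I_k] &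
        forall u v, T u v =
          [exists i : 'I_k, exists j : 'I_k, (j == i.+1 :> nat) &&
              (((u == bb i) && (v == bb j)) || ((u == bb j) && (v == bb i)))]
          || [exists i : 'I_k, ((u == bb i) && (v == tt i))
                                || ((u == tt i) && (v == bb i))]].

(* A induces a subtree of the tree T: A is nonempty and the subgraph of T
   induced by A is connected (a connected subgraph of a tree is a tree). *)
Definition induces_subtree (T : rel V) (A : {set V}) : Prop :=
  A != set0 /\
  {in A &, forall x y, connect [rel u v | T u v && (u \in A) && (v \in A)] x y}.

Definition comb_convex_wrt (e : rel V) (X Y : {set V}) (T : rel V) : Prop :=
  [/\ bipartite_parts e X Y, is_comb X T &
      forall y, y \in Y -> induces_subtree T (onbhd e y)].
End Generic.

(* Indices are 0-based: A i = a_(i+1), B j = b_(j+1), Z i = z_(i+1),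
   R j = r_(j+1) (j : 'I_p.+1, so R ord_max = r_(p+1)), W = w, R' = r'_(p+1). *)
Inductive vtx (p q : nat) : Type :=
| VA of 'I_p | VB of 'I_q | VZ of 'I_p | VR of 'I_p.+1 | VW | VR'.
Arguments VW {p q}. Arguments VR' {p q}.

Section Construction.
Variables p q : nat.

Definition vtx_code (x : vtx p q) :
  'I_p + 'I_q + 'I_p + 'I_p.+1 + bool :=
  match x with
  | VA i => inl (inl (inl (inl i)))
  | VB j => inl (inl (inl (inr j)))
  | VZ i => inl (inl (inr i))
  | VR j => inl (inr j)
  | VW => inr true
  | VR' => inr false
  end.
Definition vtx_decode (c : 'I_p + 'I_q + 'I_p + 'I_p.+1 + bool) : vtx p q :=
  match c with
  | inl (inl (inl (inl i))) => VA q i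
  | inl (inl (inl (inr j))) => VB p j
  | inl (inl (inr i)) => VZ q i
  | inl (inr j) => VR q j
  | inr true => VW
  | inr false => VR'
  end.
Lemma vtx_codeK : cancel vtx_code vtx_decode. Proof. by case. Qed.
HB.instance Definition _ := Equality.copy (vtx p q) (can_type vtx_codeK).
HB.instance Definition _ := Choice.copy (vtx p q) (can_type vtx_codeK).
HB.instance Definition _ := Countable.copy (vtx p q) (can_type vtx_codeK).
HB.instance Definition _ := Finite.copy (vtx p q) (can_type vtx_codeK).

Variable C : 'I_q -> {set 'I_p}.  (* C j = C_(j+1) as a subset of S = 'I_p *)

Definition G_arc (u v : vtx p q) : bool :=
  match u, v with
  | VA i, VB j => i \in C j
  | VA i, VZ k => i == k
  | VB _, VR _ => true
  | VR j, VW => j == ord_max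
  | VW, VR' => true
  | _, _ => false
  end.
Definition G_adj : rel (vtx p q) := fun u v => G_arc u v || G_arc v u.

Definition X_part : {set vtx p q} :=
  [set x | match x with VA _ | VR _ | VR' => true | _ => false end].
Definition Y_part : {set vtx p q} :=
  [set x | match x with VB _ | VZ _ | VW => true | _ => false end].

Definition comb_arc (u v : vtx p q) : bool :=
  match u, v with
  | VR j, VR j' => j'.+1 == j :> nat
  | VA i, VR j => j == widen_ord (leqnSn p) i
  | VR' , VR j => j == ord_max
  | _, _ => false
  end.
Definition comb_adj : rel (vtx p q) := fun u v => comb_arc u v || comb_arc v u.
End Construction.

(* Main.v *)
Require Import Defs.
From HB Require Import structures.
From mathcomp Require Import all_boot.
From mathcomp Require Import zify.
Set Implicit Arguments. Unset Strict Implicit. Unset Printing Implicit Defensive.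

Section S. Variables (p q : nat) (C : 'I_q -> {set 'I_p}).
Notation V := (vtx p q).

Lemma eqA (i k : 'I_p) : (VA q i == VA q k) = (i == k). Proof. by []. Qed.
Lemma eqB (i k : 'I_q) : (VB p i == VB p k) = (i == k). Proof. by []. Qed.
Lemma eqZ (i k : 'I_p) : (VZ q i == VZ q k) = (i == k). Proof. by []. Qed.
Lemma eqR (i k : 'I_p.+1) : (VR q i == VR q k) = (i == k). Proof. by []. Qed.

Lemma wit (D : {set V}) u v x : x \in D -> x \in cnbhd (G_adj C) u :|: cnbhd (G_adj C) v ->
  (cnbhd (G_adj C) u :|: cnbhd (G_adj C) v) :&: D != set0.
Proof. move=> xD xN; apply/set0Pn; exists x; by rewrite inE xN xD. Qed.

Lemma fwd (Cv : {set 'I_q}) : \bigcup_(j in Cv) C j = [set: 'I_p] ->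
  ve_dominating (G_adj C) (VR q ord_max |: [set VB p j | j in Cv]).
Proof.
move=> cov.
set D := _ |: _.
have rD : VR q ord_max \in D by rewrite !inE eqxx.
suff H : forall u v, G_arc C u v -> (cnbhd (G_adj C) u :|: cnbhd (G_adj C) v) :&: D != set0.
  move=> u v /orP [/H //| /H]; by rewrite setUC.
case=> [i|j|i|k||]; case=> [i'|j'|i'|k'||] //= E.
- apply: (wit rD); by rewrite !inE /G_adj /= ?orbT.
- move/eqP: E => <-.
  have : i \in \bigcup_(j in Cv) C j by rewrite cov inE.
  case/bigcupP => j jC iC.
  apply: (wit (x := VB p j)); first by rewrite !inE; apply/orP; right; apply/imsetP; exists j.
  by rewrite !inE /G_adj /= iC.
- apply: (wit rD); by rewrite !inE /G_adj /= ?orbT.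
- apply: (wit rD); move/eqP: E => ->; by rewrite !inE eqxx.
- apply: (wit rD); by rewrite !inE /G_adj /= ?eqxx ?orbT.
Qed.

Definition gmap (x : V) : option 'I_q :=
  match x with
  | VB j => Some j
  | VA i | VZ i => [pick j | i \in C j]
  | _ => None
  end.

Lemma bwd (D : {set V}) : \bigcup_(j < q) C j = [set: 'I_p] -> ve_dominating (G_adj C) D ->
  exists Cv : {set 'I_q}, #|Cv| < #|D| /\ \bigcup_(j in Cv) C j = [set: 'I_p].
Proof.
move=> cov dom.
exists [set j | Some j \in gmap @: D]; split.
  have := dom VW VR'; rewrite /G_adj /= => /(_ isT) /set0Pn [x].
  rewrite !inE /G_adj /= => /andP [xN xD].
  have Nin : None \in gmap @: D.
    apply/imsetP; exists x => //.
    by move: xN; case: x {xD} => //=.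
  apply: (@leq_ltn_trans #|(gmap @: D) :\ None|); last first.
    by have := leq_imset_card gmap D; rewrite (cardsD1 None) Nin add1n.
  rewrite -(card_imset [set j | Some j \in gmap @: D] (@Some_inj _)).
  apply: subset_leq_card; apply/subsetP => o /imsetP [j]; rewrite !inE => jin ->.
  by rewrite jin andbT.
apply/setP => i; rewrite inE; apply/bigcupP.
have := dom (VA q i) (VZ q i); rewrite /G_adj /= eqxx => /(_ isT) /set0Pn [x].
rewrite !inE /G_adj /= => /andP [xN xD].
have pk : forall y, y \in D -> gmap y = [pick j | i \in C j] -> exists2 j, j \in [set j | Some j \in gmap @: D] & i \in C j.
  move=> y yD; case: pickP => [j ij E|none E].
    by exists j => //; rewrite inE; apply/imsetP; exists y.
  have : i \in \bigcup_(j < q) C j by rewrite cov inE.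
  by case/bigcupP => j _ ij; rewrite none in ij.
move: xN xD; case: x => [a|b|a|r||] //=.
- move=> H xD; suff E : a = i by subst a; exact: pk xD _.
  move: H; rewrite ?eqA ?eqZ ?orbF => /orP [] /eqP E; first [exact E | exact (esym E)].
- rewrite !orbF => iC xD; exists b => //; rewrite inE; apply/imsetP; by exists (VB p b).
- move=> H xD; suff E : a = i by subst a; exact: pk xD _.
  move: H; rewrite ?eqA ?eqZ ?orbF => /orP [] /eqP E; first [exact E | exact (esym E)].
Qed.

Lemma bip : bipartite_parts (G_adj C) (@X_part p q) (@Y_part p q).
Proof.
split.
- by apply/setP => x; rewrite !inE; case: x.
- by apply/setP => x; rewrite !inE; case: x.
- by move=> u v; rewrite /G_adj orbC.
- by move=> x; rewrite /G_adj; case: x.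
- by move=> u v; rewrite /G_adj !inE; case: u; case: v.
Qed.

Definition tt (i : 'I_p.+1) : V :=
  if insub (val i) is Some i' then VA q i' else VR'.

Lemma ttA (a : 'I_p) : tt (widen_ord (leqnSn p) a) = VA q a.
Proof. by rewrite /tt (_ : insub _ = Some a) //; exact: valK. Qed.

Lemma ttM : tt ord_max = VR'.
Proof. by rewrite /tt insubF //= ltnn. Qed.

Lemma combP : is_comb (@X_part p q) (@comb_adj p q).
Proof.
exists p.+1, (@VR p q), tt; split => //.
- split; first by move=> a b [].
  move=> a b; rewrite /tt; case: insubP => [a' Ha Ea|Ha]; case: insubP => [b' Hb Eb|Hb] //.
    by move=> [E]; apply: val_inj; rewrite -Ea -Eb E.
  move=> _; apply: val_inj; have := ltn_ord a; have := ltn_ord b; move: Ha Hb; change (\val a) with (nat_of_ord a); change (\val b) with (nat_of_ord b); lia.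
- by move=> i j; rewrite /tt; case: insubP.
- apply/setP => x; rewrite !inE; case: x => [a|b|a|k||].
  + by apply/esym/orP; right; apply/imsetP; exists (widen_ord (leqnSn p) a); rewrite ?ttA.
  + apply/esym/norP; split; apply/negP => /imsetP [k _] //; rewrite /tt; by case: insubP.
  + apply/esym/norP; split; apply/negP => /imsetP [k _] //; rewrite /tt; by case: insubP.
  + by apply/esym/orP; left; apply/imsetP; exists k.
  + apply/esym/norP; split; apply/negP => /imsetP [k _] //; rewrite /tt; by case: insubP.
  + by apply/esym/orP; right; apply/imsetP; exists ord_max; rewrite ?ttM.
- move=> u v; apply/idP/idP.
  + rewrite /comb_adj; case: u => [a|b|a|k||]; case: v => [a'|b'|a'|k'||] //=; rewrite ?orbF => H.
    * move/eqP: H => ->; apply/orP; right; apply/existsP; exists (widen_ord (leqnSn p) a).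
      by rewrite ttA !eqxx ?orbT.
    * move/eqP: H => ->; apply/orP; right; apply/existsP; exists (widen_ord (leqnSn p) a').
      by rewrite ttA !eqxx ?orbT.
    * apply/orP; left; case/orP: H => H.
        apply/existsP; exists k'; apply/existsP; exists k; rewrite /= eq_sym H.
        by rewrite !eqxx ?orbT.
      apply/existsP; exists k; apply/existsP; exists k'; rewrite /= eq_sym H.
      by rewrite !eqxx ?orbT.
    * move/eqP: H => ->; apply/orP; right; apply/existsP; exists ord_max.
      by rewrite ttM !eqxx ?orbT.
    * move/eqP: H => ->; apply/orP; right; apply/existsP; exists ord_max.
      by rewrite ttM !eqxx ?orbT.
  + case/orP.
    * case/existsP => i /existsP [j] /andP [/eqP E /orP [] /andP [/eqP -> /eqP ->]];
        by rewrite /comb_adj /= E eqxx ?orbT.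
    * case/existsP => i /orP [] /andP [/eqP -> /eqP ->]; rewrite /comb_adj /tt;
        case: insubP => [i' _ E|Hi] /=.
      - by apply/eqP/val_inj; rewrite /= E.
      - apply/eqP/val_inj => /=; have := ltn_ord i; move: Hi; change (\val i) with (nat_of_ord i); lia.
      - by rewrite orbF; apply/eqP/val_inj; rewrite /= E.
      - rewrite orbF; apply/eqP/val_inj => /=; have := ltn_ord i; move: Hi; change (\val i) with (nat_of_ord i); lia.
Qed.

Lemma sub_conn (T : rel V) (A : {set V}) r : symmetric T -> r \in A ->
  (forall x, x \in A -> connect [rel u v | T u v && (u \in A) && (v \in A)] x r) ->
  induces_subtree T A.
Proof.
move=> sT rA H; split; first by apply/set0Pn; exists r.
move=> x y xA yA; apply: connect_trans (H x xA) _.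
rewrite sym_connect_sym; first exact: H.
move=> u v /=; rewrite sT.
by case: (u \in A); case: (v \in A); rewrite ?andbF ?andbT.
Qed.

Lemma combsym : symmetric (@comb_adj p q).
Proof. by move=> u v; rewrite /comb_adj orbC. Qed.

Lemma subtrees y : y \in (@Y_part p q) -> induces_subtree (@comb_adj p q) (onbhd (G_adj C) y).
Proof.
rewrite inE; case: y => [i|j|i|k||] // _.
- apply: (@sub_conn _ _ (VR q ord0) combsym); first by rewrite inE /G_adj.
  have claim : forall k : 'I_p.+1, connect [rel u v | comb_adj u v && (u \in onbhd (G_adj C) (VB p j)) && (v \in onbhd (G_adj C) (VB p j))] (VR q k) (VR q ord0).
    move=> [k Hk]; elim: k Hk => [|k IH] Hk.
      by rewrite (_ : Ordinal Hk = ord0) //; exact: val_inj.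
    apply: (connect_trans _ (IH (ltnW Hk))); apply: connect1.
    by rewrite /= /comb_adj !inE /G_adj /= eqxx.
  case=> [a|b|a|k||]; rewrite inE /G_adj //= => H.
  + apply: (connect_trans _ (claim (widen_ord (leqnSn p) a))); apply: connect1.
    by rewrite /= /comb_adj !inE /G_adj /= eqxx H.
- apply: (@sub_conn _ _ (VA q i) combsym); first by rewrite inE /G_adj /= eqxx.
  case=> [a|b|a|k||]; rewrite inE /G_adj //= ?orbF => /eqP ->; exact: connect0.
- apply: (@sub_conn _ _ (VR q ord_max) combsym); first by rewrite inE /G_adj /= eqxx.
  case=> [a|b|a|k||]; rewrite inE /G_adj //= ?orbF.
  + move/eqP => ->; exact: connect0.
  + move=> _; apply: connect1; by rewrite /= /comb_adj !inE /G_adj /= eqxx.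
Qed.
End S.


Theorem lemma4 (p q : nat) (C : 'I_q -> {set 'I_p}) :
  q <= p ->
  \bigcup_(j < q) C j = [set: 'I_p] ->
  comb_convex_wrt (G_adj C) (@X_part p q) (@Y_part p q) (@comb_adj p q) /\
  (forall t : nat,
     (exists Cv : {set 'I_q}, #|Cv| <= t /\ \bigcup_(j in Cv) C j = [set: 'I_p])
     <->
     (exists D : {set vtx p q}, #|D| <= t.+1 /\ ve_dominating (G_adj C) D)).
Proof.
move=> _ cov; split.
  split; [exact: bip | exact: combP | exact: subtrees].
move=> t; split.
- move=> [Cv [Ht HC]]; exists (VR q ord_max |: [set VB p j | j in Cv]); split; last exact: fwd.
  rewrite cardsU1; apply: (leq_trans (leq_add (leq_b1 _) (leq_imset_card _ _))).
  by rewrite add1n ltnS.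
- move=> [D [HD Hdom]]; have [Cv [H1 H2]] := bwd cov Hdom; exists Cv; split => //.
  by rewrite -ltnS; exact: leq_trans H1 HD.
Qed.
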